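(* Let $X$ be a presheaf of sets on $\mathscr{V}_f$ taking values in finite sets. For each $n\in\mathbb{N}$, let $X_n$ be the image of the composite $X\to\mathbb{F}[X]\to q_n\mathbb{F}[X]$, with the canonical surjection $X\twoheadrightarrow X_n$. Then $X_n$ is a finite presheaf of degree at most $n$, and $X\twoheadrightarrow X_n$ is the universal map from $X$ to a finite presheaf of degree at most $n$ (every map from $X$ to such a presheaf factors uniquely through it). These maps form a tower $\cdots\to X_{n+1}\to X_n\to X_{n-1}\to\cdots$ of maps under $X$.
   Context: $p$ prime, $\mathbb{F}=\mathbb{F}_p$, $\mathscr{V}_f$ finite-dimensional $\mathbb{F}$-vector spaces. $\mathscr{F}$ is the abelian category of functors $\mathscr{V}_f^{\mathrm{op}}\to$ ($\mathbb{F}$-vector spaces). $\mathbb{F}[X]\in\mathscr{F}$ is the sectionwise linearization of $X$, with unit $X\hookrightarrow\mathbb{F}[X]$. $q_n:\mathscr{F}\to\mathscr{F}$ is left adjoint to the inclusion of functors of Eilenberg–MacLane polynomial degree $\le n$, with universal quotient $F\twoheadrightarrow q_nF$. A presheaf $Y$ taking finite values is finite of degree at most $n$ if the composite $Y\to\mathbb{F}[Y]\to q_n\mathbb{F}[Y]$ is a monomorphism (equivalently, $Y$ embeds in a functor of $\mathscr{F}$ with a finite composition series and of polynomial degree $\le n$). *)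

(* Defs.v *)
From HB Require Import structures.
From mathcomp Require Import all_boot all_order all_algebra.
Set Implicit Arguments. Unset Strict Implicit. Unset Printing Implicit Defensive.
Import GRing.Theory.
Local Open Scope ring_scope.

(* The category V_f of finite-dimensional K-vector spaces is modelled by its
   skeleton: objects are the natural numbers d (standing for K^d, row
   vectors), and a linear map K^m -> K^n is a matrix A : 'M_(m,n) acting by
   v |-> v *m A.  The composite "first A then B" is A *m B.  A contravariant
   functor therefore satisfies  F(A *m B) = F(A) o F(B). *)

Section Defs.
Variable K : fieldType.

Record fpresheaf := FPresheaf {
  pobj : nat -> finType;
  pmap : forall m n, 'M[K]_(m, n) -> pobj n -> pobj m;
  pmap1 : forall n (x : pobj n), pmap (1%:M : 'M[K]_n) x = x;
  pmapM : forall l m n (A : 'M[K]_(l, m)) (B : 'M[K]_(m, n)) (x : pobj n),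
      pmap (A *m B) x = pmap A (pmap B x) }.
Arguments pmap _ {m n}.

Definition pshmor (X Y : fpresheaf) (f : forall d, pobj X d -> pobj Y d) :=
  forall m n (A : 'M[K]_(m, n)) (x : pobj X n),
    f m (pmap X A x) = pmap Y A (f n x).

Record vfunctor := VFunctor {
  fobj : nat -> lmodType K;
  fmap : forall m n, 'M[K]_(m, n) -> fobj n -> fobj m;
  fmap_lin : forall m n (A : 'M[K]_(m, n)) (a : K) (u v : fobj n),
      fmap A (a *: u + v) = a *: fmap A u + fmap A v;
  fmap1 : forall n (x : fobj n), fmap (1%:M : 'M[K]_n) x = x;
  fmapM : forall l m n (A : 'M[K]_(l, m)) (B : 'M[K]_(m, n)) (x : fobj n),
      fmap (A *m B) x = fmap A (fmap B x) }.
Arguments fmap _ {m n}.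

Definition ntrans (F G : vfunctor) (phi : forall d, fobj F d -> fobj G d) :=
  (forall d (a : K) (u v : fobj F d), phi d (a *: u + v) = a *: phi d u + phi d v) /\
  (forall m n (A : 'M[K]_(m, n)) (u : fobj F n),
      phi m (fmap F A u) = fmap G A (phi n u)).

Definition psh_to_fun (X : fpresheaf) (F : vfunctor)
    (f : forall d, pobj X d -> fobj F d) :=
  forall m n (A : 'M[K]_(m, n)) (x : pobj X n), f m (pmap X A x) = fmap F A (f n x).

(* Eilenberg--MacLane polynomial degree <= n: the (n+1)-st cross-effect
   vanishes.  A direct sum decomposition W = V_0 (+) ... (+) V_n is given by
   a complete family of orthogonal idempotents p_0, ..., p_n of W; the
   cross-effect cr_{n+1}F(V_0,...,V_n) is the intersection over i of the
   kernels of the restriction maps F(W) -> F(W_i), W_i = (+)_{j<>i} V_j,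
   i.e. of the kernels of F(1 - p_i) (1 - p_i being the projection of W onto
   W_i followed by the inclusion, and F(projection) being injective). *)
Definition deg_le (F : vfunctor) (n : nat) :=
  forall d (p : 'I_n.+1 -> 'M[K]_d),
    (forall i, p i *m p i = p i) ->
    (forall i j, i != j -> p i *m p j = 0) ->
    \sum_i p i = 1%:M ->
    forall x : fobj F d, (forall i, fmap F (1%:M - p i) x = 0) -> x = 0.

Section Lin.
Variable X : fpresheaf.

Definition lin_map m n (A : 'M[K]_(m, n)) (f : {ffun pobj X n -> K^o}) :
    {ffun pobj X m -> K^o} :=
  [ffun y => \sum_(x | pmap X A x == y) f x].

Lemma lin_map_lin m n (A : 'M[K]_(m, n)) (a : K) (u v : {ffun pobj X n -> K^o}) :
  lin_map A (a *: u + v) = a *: lin_map A u + lin_map A v.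
Proof.
apply/ffunP=> y; rewrite !ffunE.
under eq_bigr do rewrite !ffunE.
by rewrite big_split /= -mulr_sumr.
Qed.

Lemma lin_map1 n (f : {ffun pobj X n -> K^o}) : lin_map (1%:M : 'M[K]_n) f = f.
Proof.
apply/ffunP=> y; rewrite ffunE.
under eq_bigl do rewrite pmap1.
by rewrite big_pred1_eq.
Qed.

Lemma lin_mapM l m n (A : 'M[K]_(l, m)) (B : 'M[K]_(m, n))
    (f : {ffun pobj X n -> K^o}) :
  lin_map (A *m B) f = lin_map A (lin_map B f).
Proof.
apply/ffunP=> y; rewrite !ffunE.
under [RHS]eq_bigr do rewrite ffunE.
rewrite (eq_bigl (fun x => pmap X A (pmap X B x) == y)); last by move=> x; rewrite pmapM.
rewrite (partition_big (pmap X B) (fun z => pmap X A z == y)) /=; last by [].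
apply: eq_bigr => z /eqP Hz; apply: eq_bigl => x.
apply/idP/idP; first by case/andP.
by move=> /eqP Hx; rewrite Hx Hz !eqxx.
Qed.

Definition lin : vfunctor :=
  @VFunctor (fun d => {ffun pobj X d -> K^o}) lin_map lin_map_lin lin_map1 lin_mapM.

Definition lin_unit d (x : pobj X d) : fobj lin d := [ffun y => (y == x)%:R].
End Lin.

Definition is_qn (n : nat) (F Q : vfunctor) (eta : forall d, fobj F d -> fobj Q d) :=
  [/\ deg_le Q n, ntrans eta &
    forall (G : vfunctor) (phi : forall d, fobj F d -> fobj G d),
      deg_le G n -> ntrans phi ->
      exists2 psi : forall d, fobj Q d -> fobj G d, ntrans psi &
        (forall d u, psi d (eta d u) = phi d u) /\
        (forall psi' : forall d, fobj Q d -> fobj G d, ntrans psi' ->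
           (forall d u, psi' d (eta d u) = phi d u) ->
           forall d v, psi' d v = psi d v)].


Definition fin_deg_le (n : nat) (Y : fpresheaf) :=
  exists (Q : vfunctor) (eta : forall d, fobj (lin Y) d -> fobj Q d),
    @is_qn n (lin Y) Q eta /\
    forall d, injective (fun y : pobj Y d => eta d (lin_unit y)).

End Defs.
Arguments is_qn {K} n F Q eta.
Arguments pmap {K} _ {m n}.
Arguments fmap {K} _ {m n}.

(* Main.v *)
Require Import Defs.
From HB Require Import structures.
From mathcomp Require Import all_boot all_order all_algebra.
Unset Strict Implicit. Unset Printing Implicit Defensive.
Import GRing.Theory.
Local Open Scope ring_scope.

Section Lin.
Variable K : fieldType.
Variables (U V : lmodType K) (f : U -> V).
Hypothesis hf : forall a u v, f (a *: u + v) = a *: f u + f v.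
Lemma linfD u v : f (u + v) = f u + f v.
Proof. by have := hf 1 u v; rewrite !scale1r. Qed.
Lemma linf0 : f 0 = 0.
Proof. by have := hf (-1) 0 0; rewrite scaler0 addr0 scaleN1r addNr. Qed.
Lemma linfZ a u : f (a *: u) = a *: f u.
Proof. by rewrite -[a *: u]addr0 hf linf0 addr0. Qed.
Lemma linf_sum (I : Type) (r : seq I) (P : pred I) (F : I -> U) :
  f (\sum_(i <- r | P i) F i) = \sum_(i <- r | P i) f (F i).
Proof. exact: (big_morph f linfD linf0). Qed.
End Lin.
Arguments linfD {K U V f} hf.
Arguments linf0 {K U V f} hf.
Arguments linfZ {K U V f} hf.
Arguments linf_sum {K U V f} hf {I r P F}.


Section Gen.
Variable K : fieldType.
Definition islin (U V : lmodType K) (f : U -> V) :=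
  forall a u v, f (a *: u + v) = a *: f u + f v.
Arguments islin {U V}.

Lemma islin_comp (U V W : lmodType K) (f : U -> V) (g : V -> W) :
  islin f -> islin g -> islin (fun u => g (f u)).
Proof. by move=> hf hg a u v; rewrite hf hg. Qed.

Arguments islin_comp {U V W f g}.
Lemma lin_decomp (X : fpresheaf K) d (u : fobj (lin X) d) :
  u = \sum_x u x *: lin_unit x.
Proof.
apply/ffunP=> z; rewrite sum_ffunE (bigD1 z) //= !ffunE.
rewrite eqxx big1 ?addr0; first by rewrite /GRing.scale /= mulr1.
by move=> i iz; rewrite ffunE /lin_unit ffunE eq_sym (negbTE iz) /GRing.scale /= mulr0.
Qed.

Arguments lin_decomp {X d}.
Lemma lin_ext (X : fpresheaf K) d (V : lmodType K) (F G : fobj (lin X) d -> V) :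
  islin F -> islin G -> (forall x, F (lin_unit x) = G (lin_unit x)) ->
  forall u, F u = G u.
Proof.
move=> hF hG hFG u; rewrite (lin_decomp u) (linf_sum hF) (linf_sum hG).
by apply: eq_bigr => x _; rewrite (linfZ hF) (linfZ hG) hFG.
Qed.

Arguments lin_ext {X d V F G}.
Lemma lin_map_unit (X : fpresheaf K) m d (A : 'M[K]_(m, d)) (x : pobj X d) :
  fmap (lin X) A (lin_unit x) = lin_unit (Defs.pmap X A x).
Proof.
apply/ffunP=> y; rewrite !ffunE /=.
rewrite big_mkcond (bigD1 x) //= big1 => [|z /negbTE zx]; last first.
  by rewrite ffunE zx; case: ifP.
by rewrite ffunE eqxx addr0 eq_sym; case: ifP.
Qed.

Arguments lin_map_unit {X m d}.
Section LinF.
Variables (X Y : fpresheaf K) (f : forall d, pobj X d -> pobj Y d).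
Hypothesis hf : pshmor f.
Definition linf d (u : fobj (lin X) d) : fobj (lin Y) d :=
  \sum_x u x *: lin_unit (f d x).

Lemma linf_lin d : islin (linf d).
Proof.
move=> a u v; rewrite /linf.
under eq_bigr do rewrite !ffunE scalerDl -scalerA.
by rewrite big_split /= scaler_sumr.
Qed.

Lemma linf_unit d x : linf d (lin_unit x) = lin_unit (f d x).
Proof.
rewrite /linf (bigD1 x) //= big1 => [|z zx].
  by rewrite ffunE eqxx scale1r addr0.
by rewrite ffunE (negbTE zx) scale0r.
Qed.

Lemma linf_ntrans : ntrans linf.
Proof.
split; first exact: linf_lin.
move=> m n A; apply: lin_ext.
- exact: islin_comp (@fmap_lin _ _ _ _ A) (linf_lin m).
- exact: islin_comp (linf_lin n) (@fmap_lin _ _ _ _ A).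
move=> x; by rewrite lin_map_unit !linf_unit lin_map_unit hf.
Qed.
End LinF.

Lemma ntrans_comp (F G H : vfunctor K) phi psi :
  @ntrans K F G phi -> @ntrans K G H psi -> ntrans (fun d u => psi d (phi d u)).
Proof.
move=> [h1 h2] [h3 h4]; split; first by move=> d; apply: islin_comp.
by move=> m n A u; rewrite h2 h4.
Qed.

Lemma deg_le_S (G : vfunctor K) n : deg_le G n -> deg_le G n.+1.
Proof.
move=> H d p pI pO pS x hx.
have vn : (inord n : 'I_n.+2) = n :> nat by rewrite inordK.
have nm : (inord n : 'I_n.+2) != ord_max.
  by rewrite -val_eqE /= inordK // neq_ltn ltnSn.
pose q (i : 'I_n.+1) := if (i : nat) == n then p (inord n) + p ord_max else p (inord i).
apply: (H d q).
- move=> i; rewrite /q; case: eqP => _ //.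
  rewrite mulmxDl !mulmxDr !pI (pO _ _ nm) (pO _ _ _) ?addr0 ?add0r //.
  by rewrite eq_sym.
- move=> i j ij; rewrite /q.
  have neqi : forall (k : 'I_n.+1), (k : nat) != n -> (inord k : 'I_n.+2) != inord n /\ (inord k : 'I_n.+2) != ord_max.
    move=> k kn; have kl : (k < n.+2)%N by rewrite (leq_trans (ltn_ord k)).
    split; rewrite -val_eqE /= ?inordK //.
    by rewrite neq_ltn (ltn_ord k).
  have ijv : (i : nat) != j by [].
  case: eqP => [iE|iN]; case: eqP => [jE|jN].
  + by move: ijv; rewrite iE jE eqxx.
  + have [h1 h2] := neqi j (introN eqP jN).
    by rewrite mulmxDl !pO ?addr0 // eq_sym.
  + have [h1 h2] := neqi i (introN eqP iN).
    by rewrite mulmxDr !pO ?addr0.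
  + apply: pO; rewrite -val_eqE /= !inordK ?(leq_trans (ltn_ord _)) //.
- rewrite -pS [RHS]big_ord_recr [in RHS]big_ord_recr /= big_ord_recr /= /q /= eqxx.
  rewrite -addrA; congr (_ + _); last first.
    by congr (_ + _); congr (p _); apply: val_inj; rewrite /= inordK.
  apply: eq_bigr => i _; rewrite /= (ltn_eqF (ltn_ord i)); congr (p _).
  by apply: val_inj; rewrite /= inordK // -addn2 ltn_addr.
- move=> i; rewrite /q; case: eqP => _; last exact: hx.
  have -> : 1%:M - (p (inord n) + p ord_max) = (1%:M - p (inord n)) *m (1%:M - p ord_max).
    rewrite mulmxBl !mulmxBr !mul1mx mulmx1 (pO _ _ nm) subr0.
    by rewrite opprD addrA addrAC.
  by rewrite fmapM hx (linf0 (@fmap_lin _ G _ _ _)).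
Qed.
End Gen.
Arguments islin {K U V}.
Arguments islin_comp {K U V W f g}.
Arguments lin_decomp {K X d}.
Arguments lin_ext {K X d V F G}.
Arguments lin_map_unit {K X m d}.
Arguments linf {K X Y} f d u.
Arguments linf_lin {K X Y} f d.
Arguments linf_unit {K X Y} f d x.
Arguments linf_ntrans {K X Y f}.
Arguments ntrans_comp {K F G H phi psi}.
Arguments deg_le_S {K G n}.

Unset Implicit Arguments.
Section Main.
Variable K : fieldType.
Variable X : fpresheaf K.
Variable Q : nat -> vfunctor K.
Variable eta : forall n d, fobj (lin X) d -> fobj (Q n) d.
Hypothesis hQ : forall n, is_qn n (lin X) (Q n) (eta n).

Definition e n d (x : pobj X d) : fobj (Q n) d := eta n d (lin_unit x).
Definition img n d := [seq e n d x | x <- enum (pobj X d)].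
Definition Xo n d : finType := seq_sub (img n d).

Lemma eta_lin n d : forall a u v, eta n d (a *: u + v) = a *: eta n d u + eta n d v.
Proof. by have [_ [H _] _] := hQ n. Qed.
Lemma eta_nat n m d (A : 'M[K]_(m, d)) u : eta n m (fmap (lin X) A u) = fmap (Q n) A (eta n d u).
Proof. by have [_ [_ H] _] := hQ n. Qed.

Lemma e_pmap n m d (A : 'M[K]_(m, d)) x : e n m (Defs.pmap X A x) = fmap (Q n) A (e n d x).
Proof. by rewrite /e -lin_map_unit eta_nat. Qed.

Lemma img_fmap n m d (A : 'M[K]_(m, d)) v : v \in img n d -> fmap (Q n) A v \in img n m.
Proof. by case/mapP=> x _ ->; rewrite -e_pmap; apply: map_f; rewrite mem_enum. Qed.

Definition Xmap n m d (A : 'M[K]_(m, d)) (y : Xo n d) : Xo n m :=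
  @SeqSub _ (img n m) (fmap (Q n) A (ssval y)) (img_fmap n m d A _ (ssvalP y)).
Arguments Xmap n {m d}.
Arguments img_fmap n {m d}.

Lemma Xmap1 n d (y : Xo n d) : Xmap n (1%:M : 'M[K]_d) y = y.
Proof. by apply: val_inj; rewrite /= fmap1. Qed.
Lemma XmapM n l m d (A : 'M[K]_(l, m)) (B : 'M[K]_(m, d)) (y : Xo n d) :
  Xmap n (A *m B) y = Xmap n A (Xmap n B y).
Proof. by apply: val_inj; rewrite /= fmapM. Qed.

Definition XP n : fpresheaf K := @FPresheaf K (Xo n) (@Xmap n) (Xmap1 n) (XmapM n).

Definition pi n d (x : pobj X d) : pobj (XP n) d :=
  @SeqSub _ (img n d) (e n d x) (map_f _ (mem_enum _ x)).
Definition iota n d (y : pobj (XP n) d) : fobj (Q n) d := ssval y.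

Lemma pi_mor n : pshmor (pi n).
Proof. by move=> m d A x; apply: val_inj; rewrite /= e_pmap. Qed.
Lemma pi_surj n d (y : pobj (XP n) d) : exists x, pi n d x == y.
Proof.
case: y => v hv; case/mapP: (hv) => x _ ex; exists x; apply/eqP/val_inj => /=. by rewrite ex.
Qed.
Definition rep n d (y : pobj (XP n) d) : pobj X d := xchoose (pi_surj n d y).
Lemma repK n d (y : pobj (XP n) d) : pi n d (rep n d y) = y.
Proof. exact/eqP/(xchooseP (pi_surj n d y)). Qed.

Lemma pi_e n d x1 x2 : pi n d x1 = pi n d x2 -> e n d x1 = e n d x2.
Proof. exact: (congr1 val). Qed.

Definition eta' n d (u : fobj (lin (XP n)) d) : fobj (Q n) d :=
  \sum_y u y *: iota n d y.

Lemma eta'_lin n d : islin (eta' n d).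
Proof.
move=> a u v; rewrite /eta'.
under eq_bigr do rewrite !ffunE scalerDl -scalerA.
by rewrite big_split /= scaler_sumr.
Qed.

Lemma eta'_unit n d y : eta' n d (lin_unit y) = iota n d y.
Proof.
rewrite /eta' (bigD1 y) //= big1 => [|z zy].
  by rewrite ffunE eqxx scale1r addr0.
by rewrite ffunE (negbTE zy) scale0r.
Qed.

Lemma eta'_ntrans n : ntrans (eta' n).
Proof.
split; first exact: eta'_lin.
move=> m d A; apply: lin_ext.
- exact: islin_comp (@fmap_lin _ _ _ _ A) (eta'_lin n m).
- exact: islin_comp (eta'_lin n d) (@fmap_lin _ _ _ _ A).
by move=> y; rewrite lin_map_unit !eta'_unit.
Qed.

Lemma eta_factor n d u : eta n d u = eta' n d (linf (pi n) d u).
Proof.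
move: u; apply: lin_ext.
- exact: eta_lin.
- exact: islin_comp (linf_lin _ d) (eta'_lin n d).
by move=> x; rewrite linf_unit eta'_unit.
Qed.

Lemma XP_deg n : fin_deg_le n (XP n).
Proof.
exists (Q n), (eta' n); split; last first.
  by move=> d y1 y2 /=; rewrite !eta'_unit; apply: val_inj.
have [hd _ U] := hQ n.
split => //; first exact: eta'_ntrans.
move=> G phi hG hphi.
have hphi' := ntrans_comp (linf_ntrans (pi_mor n)) hphi.
have [psi hpsi [h1 h2]] := U G _ hG hphi'.
exists psi => //; split.
- move=> d; apply: (lin_ext (islin_comp (eta'_lin n d) (hpsi.1 d)) (hphi.1 d)) => y.
  rewrite eta'_unit -(repK n d y).
  change (iota n d (pi n d (rep n d y))) with (eta n d (lin_unit (rep n d y))).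
  by rewrite h1 linf_unit.
- move=> psi' hpsi' h'; apply: h2 => // d u.
  by rewrite eta_factor h'.
Qed.

Lemma XP_univ n (Y : fpresheaf K) (f : forall d, pobj X d -> pobj Y d) :
  fin_deg_le n Y -> pshmor f ->
  exists2 g : forall d, pobj (XP n) d -> pobj Y d, pshmor g &
    (forall d x, g d (pi n d x) = f d x) /\
    (forall g' : forall d, pobj (XP n) d -> pobj Y d, pshmor g' ->
       (forall d x, g' d (pi n d x) = f d x) ->
       forall d y, g' d y = g d y).
Proof.
move=> [QY [etaY [[hdeg hnt _] inj]]] hf.
have hphi := ntrans_comp (linf_ntrans hf) hnt.
have [_ _ U] := hQ n; have [psi hpsi [h1 _]] := U QY _ hdeg hphi.
have key : forall d x1 x2, e n d x1 = e n d x2 -> f d x1 = f d x2.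
  move=> d x1 x2 E; apply: (inj d) => /=.
  have := h1 d (lin_unit x1); have := h1 d (lin_unit x2); rewrite !linf_unit.
  by rewrite -/(e n d x1) -/(e n d x2) E => <- <-.
pose g := fun d y => f d (rep n d y).
have gpi : forall d x, g d (pi n d x) = f d x.
  by move=> d x; apply: key; apply: pi_e; rewrite repK.
exists g.
  by move=> m d A y; rewrite -(repK n d y) -pi_mor !gpi hf.
split; first exact: gpi.
by move=> g' _ hg' d y; rewrite -(repK n d y) hg' gpi.
Qed.

Lemma e_tower n d x1 x2 : e n.+1 d x1 = e n.+1 d x2 -> e n d x1 = e n d x2.
Proof.
have [hd hnt _] := hQ n; have [_ _ U] := hQ n.+1.
have [psi _ [h1 _]] := U (Q n) (eta n) (deg_le_S hd) hnt.
by move=> E; rewrite /e -!h1; congr (psi d _); exact: E.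
Qed.

Definition tw n d (y : pobj (XP n.+1) d) : pobj (XP n) d := pi n d (rep n.+1 d y).

Lemma tw_pi n d x : tw n d (pi n.+1 d x) = pi n d x.
Proof. by apply: val_inj => /=; apply: e_tower; apply: pi_e; rewrite repK. Qed.

Lemma tw_mor n : pshmor (tw n).
Proof. by move=> m d A y; rewrite -(repK n.+1 d y) -pi_mor !tw_pi pi_mor. Qed.

End Main.

Theorem proposition3p11 (p : nat) (hp : prime p) (X : fpresheaf 'F_p)
    (Q : nat -> vfunctor 'F_p)
    (eta : forall n d, fobj (lin X) d -> fobj (Q n) d)
    (hQ : forall n, is_qn n (lin X) (Q n) (eta n)) :
  exists (Xn : nat -> fpresheaf 'F_p)
         (pi : forall n d, pobj X d -> pobj (Xn n) d)
         (iota : forall n d, pobj (Xn n) d -> fobj (Q n) d)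
         (t : forall n d, pobj (Xn n.+1) d -> pobj (Xn n) d),
  forall n,
    [/\ (* X_n is the image of X -> F[X] -> q_n F[X]: *)
        [/\ pshmor (pi n), (forall d (y : pobj (Xn n) d), exists x, pi n d x = y),
            psh_to_fun (iota n), (forall d, injective (iota n d)) &
            (forall d (x : pobj X d), iota n d (pi n d x) = eta n d (lin_unit x))],
        (* X_n is finite of degree at most n: *)
        fin_deg_le n (Xn n),
        (* X -> X_n is universal among maps to finite presheaves of degree <= n: *)
        (forall (Y : fpresheaf 'F_p) (f : forall d, pobj X d -> pobj Y d),
           fin_deg_le n Y -> pshmor f ->
           exists2 g : forall d, pobj (Xn n) d -> pobj Y d, pshmor g &
             (forall d x, g d (pi n d x) = f d x) /\
             (forall g' : forall d, pobj (Xn n) d -> pobj Y d, pshmor g' ->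
                (forall d x, g' d (pi n d x) = f d x) ->
                forall d y, g' d y = g d y)) &
        (* the tower X_{n+1} -> X_n of maps under X: *)
        (pshmor (t n) /\ forall d (x : pobj X d), t n d (pi n.+1 d x) = pi n d x)].
Proof.
exists (XP _ X Q eta hQ), (pi _ X Q eta hQ), (iota _ X Q eta hQ), (tw _ X Q eta hQ).
move=> n; split.
- split.
  + exact: pi_mor.
  + by move=> d y; have [x /eqP] := pi_surj _ X Q eta hQ n d y; exists x.
  + by [].
  + by move=> d; apply: val_inj.
  + by [].
- exact: XP_deg.
- by move=> Y f; apply: XP_univ.
- by split; [apply: tw_mor | apply: tw_pi].
Qed.
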